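(* Let $\mathcal{E}$ be an equivalence class of words under $\sim$. Then (i) all words in $\mathcal{E}$ have the same length, and (ii) $\mathcal{E}$ is finite.
   Context: $\mathcal{A}$ is the free associative $\mathbb{C}$-algebra on noncommuting generators $L,R$; words are finite products of these letters. A word is balanced if it contains equally many $L$'s and $R$'s. $\mathcal{J}$ is the two-sided ideal generated by $\{FG-GF : F,G \text{ nonempty balanced words}\}$, and for words $X,Y$, $X\sim Y$ means $X-Y\in\mathcal{J}$. *)

(* Defs.v *)
From HB Require Import structures.
From mathcomp Require Import all_boot all_order all_algebra.
From mathcomp Require Import complex.
From mathcomp Require Import Rstruct.
Set Implicit Arguments. Unset Strict Implicit. Unset Printing Implicit Defensive.
Import Order.TTheory GRing.Theory Num.Theory.
Local Open Scope ring_scope.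

Definition CC : Type := complex Rdefinitions.R.

(* Words in the letters L (= true) and R (= false). *)
Definition word := seq bool.

Definition balanced (w : word) : bool := count id w == count negb w.

(* We work in the ambient space of all functions
   word -> CC (formal series) with concatenation-convolution product; the
   free algebra A is the subspace of finitely supported functions. *)
Definition alg := word -> CC.

Definition finsupp (f : alg) : Prop :=
  exists s : seq word, forall w, w \notin s -> f w = 0.

Definition mono (X : word) : alg := fun w => (w == X)%:R.

Definition aadd (f g : alg) : alg := fun w => f w + g w.
Definition asub (f g : alg) : alg := fun w => f w - g w.

Definition amul (f g : alg) : alg :=
  fun w => \sum_(i < (size w).+1) f (take i w) * g (drop i w).

(* J: the two-sided ideal of A generated by FG - GF, F, G nonempty balanced
   words; i.e. the smallest subset of A containing the generators, 0, closed
   under addition and under left/right multiplication by elements of A. *)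
Inductive inJ : alg -> Prop :=
| J_gen (F G : word) : F != [::] -> G != [::] -> balanced F -> balanced G ->
    inJ (asub (amul (mono F) (mono G)) (amul (mono G) (mono F)))
| J_zero : inJ (fun _ => 0)
| J_add (f g : alg) : inJ f -> inJ g -> inJ (aadd f g)
| J_mull (a f : alg) : finsupp a -> inJ f -> inJ (amul a f)
| J_mulr (f a : alg) : finsupp a -> inJ f -> inJ (amul f a)
| J_ext (f g : alg) : inJ f -> (forall w, f w = g w) -> inJ g.

Definition sim (X Y : word) : Prop := inJ (asub (mono X) (mono Y)).

(* Main.v *)
Require Import Defs.
From mathcomp Require Import all_boot.
From HB Require Import structures.
From mathcomp Require Import all_order all_algebra.
From mathcomp Require Import complex.
From mathcomp Require Import Rstruct.
Set Implicit Arguments. Unset Strict Implicit. Unset Printing Implicit Defensive.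
Import Order.TTheory GRing.Theory Num.Theory.

Fixpoint words (n : nat) : seq word :=
  if n is m.+1 then map (cons true) (words m) ++ map (cons false) (words m)
  else [:: [::]].

Lemma words_size n w : w \in words n -> size w = n.
Proof.
elim: n w => [|n IH] w /=; first by rewrite inE => /eqP ->.
by rewrite mem_cat => /orP [] /mapP [u /IH <- ->].
Qed.

Lemma words_mem w : w \in words (size w).
Proof.
elim: w => [|b w IH] /=; first by rewrite inE.
by rewrite mem_cat; case: b; [rewrite map_f | rewrite orbC map_f].
Qed.

Local Open Scope ring_scope.

Definition S n (f : alg) : CC := \sum_(w <- words n) f w.

Lemma split_sum (h : word -> word -> CC) i n : (i <= n)%N ->
  \sum_(w <- words n) h (take i w) (drop i w) =
  \sum_(u <- words i) \sum_(v <- words (n - i)) h u v.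
Proof.
elim: i n h => [|i IH] n h Hi.
  by rewrite /= big_cons big_nil addr0 subn0; apply: eq_bigr => w _; rewrite take0 drop0.
case: n Hi => [//|n] Hi /=.
rewrite !big_cat !big_map /= subSS.
by rewrite (IH n (fun u v => h (true :: u) v)) // (IH n (fun u v => h (false :: u) v)).
Qed.

Lemma S_mul n a b : S n (amul a b) = \sum_(i < n.+1) S i a * S (n - i) b.
Proof.
rewrite /S /amul big_seq.
under eq_bigr => w Hw do rewrite (words_size Hw).
rewrite -big_seq exchange_big /=; apply: eq_bigr => i _.
rewrite (split_sum (fun u v => a u * b v)); last by rewrite -ltnS ltn_ord.
rewrite mulr_suml; apply: eq_bigr => u _; by rewrite mulr_sumr.
Qed.

Lemma S_mono n F : S n (mono F) = (size F == n)%:R.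
Proof.
rewrite /S /mono.
elim: n F => [|n IH] F /=.
  by rewrite big_cons big_nil addr0; case: F.
rewrite big_cat !big_map /=.
case: F => [|c F] /=.
  by rewrite !big1 ?addr0.
rewrite eqSS; case: c.
  by rewrite [X in _ + X]big1 ?addr0 // IH.
by rewrite big1 ?add0r // IH.
Qed.

Lemma S_inJ f : inJ f -> forall n, S n f = 0.
Proof.
elim=> {f}.
- move=> F G _ _ _ _ n.
  rewrite /S /asub sumrB -!/(S n _) !S_mul.
  apply/eqP; rewrite subr_eq0; apply/eqP.
  rewrite (reindex_inj rev_ord_inj) /=; apply: eq_bigr => i _.
  rewrite !S_mono subSS subKn; last by rewrite -ltnS ltn_ord.
  by rewrite mulrC.
- by move=> n; rewrite /S big1.
- by move=> f g _ Hf _ Hg n; rewrite /S /aadd big_split /= -!/(S n _) Hf Hg addr0.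
- by move=> a f _ _ Hf n; rewrite S_mul big1 // => i _; rewrite Hf mulr0.
- by move=> f a _ _ Hf n; rewrite S_mul big1 // => i _; rewrite Hf mul0r.
- by move=> f g _ Hf Hfg n; rewrite -(Hf n) /S; apply: eq_bigr => w _; rewrite Hfg.
Qed.

Theorem corollary3p3 :
  (forall X Y : word, sim X Y -> size X = size Y) /\
  (forall X : word, exists s : seq word, forall Y : word, sim X Y -> Y \in s).
Proof.
have H1 : forall X Y : word, sim X Y -> size X = size Y.
  move=> X Y /S_inJ /(_ (size X)).
  rewrite /S /asub sumrB -!/(S _ _) !S_mono eqxx.
  case: eqP => // _ /eqP; rewrite subr0 oner_eq0 //.
split=> // X; exists (words (size X)) => Y /H1 ->; exact: words_mem.
Qed.
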